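(* Let $q$ be a prime power and $n,k,l$ positive integers. The extreme points of the $l$-chain profile polytope of $k$-Sperner families of subspaces of $\mathbb{F}_q^n$ are the $l$-chain profile vectors of the families that are unions of at most $k$ full levels.
   Context: Level $i$ is the set of all $i$-dimensional subspaces of $\mathbb{F}_q^n$, $0\le i\le n$. A family $\mathcal{F}$ of subspaces is $k$-Sperner if it contains no chain $F_1\subsetneq F_2\subsetneq\dots\subsetneq F_{k+1}$ of $k+1$ members. The $l$-chain profile vector of a family $\mathcal{F}$ of subspaces is the vector in $\mathbb{R}^{\binom{n+1}{l}}$ whose coordinates are indexed by sets $\{i_1<i_2<\dots<i_l\}\subseteq\{0,\dots,n\}$, the coordinate for $\{i_1,\dots,i_l\}$ being the number of chains $F_1\subsetneq\dots\subsetneq F_l$ with $F_j\in\mathcal{F}$ and $\dim F_j=i_j$ for all $j$. The $l$-chain profile polytope of $k$-Sperner families is the convex hull of the $l$-chain profile vectors of all $k$-Sperner families of subspaces of $\mathbb{F}_q^n$. *)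

(* Defs.v *)
From HB Require Import structures.
From mathcomp Require Import all_boot all_order all_algebra all_field.
From mathcomp Require Import reals.
Set Implicit Arguments. Unset Strict Implicit. Unset Printing Implicit Defensive.
Import Order.TTheory GRing.Theory Num.Theory.
Local Open Scope ring_scope.
Import VectorInternalTheory.

(* The finite field F_q is represented by an arbitrary finite field F
   (q = #|F| is then an arbitrary prime power).  Subspaces of F_q^n are
   the elements of {vspace 'rV[F]_n}, which we equip with a finType
   structure (it is a subtype of a finite matrix type). *)
HB.instance Definition _ (F : finFieldType) (vT : vectType F) :=
  [Countable of {vspace vT} by <:].
HB.instance Definition _ (F : finFieldType) (vT : vectType F) :=
  [Finite of {vspace vT} by <:].

Section Profiles.
Variables (F : finFieldType) (n : nat).

Definition subsp := {vspace 'rV[F]_n}.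

Definition psubv (U V : subsp) : bool := (U <= V)%VS && (U != V).

Definition is_chain (m : nat) (c : 'I_m -> subsp) : bool :=
  [forall i : 'I_m, forall j : 'I_m, (i.+1 == j :> nat) ==> psubv (c i) (c j)].

Definition k_Sperner (k : nat) (Fam : {set subsp}) : Prop :=
  ~ exists c : 'I_k.+1 -> subsp, (forall i, c i \in Fam) /\ is_chain c.

Definition lsets (l : nat) := {S : {set 'I_n.+1} | #|S| == l}.

Definition chain_count (l : nat) (Fam : {set subsp}) (S : lsets l) : nat :=
  #|[set c : {ffun 'I_l -> subsp} |
      [&& [forall j, c j \in Fam], is_chain c &
          [forall j : 'I_l, \dim (c j) == val (nth ord0 (enum (val S)) j)]]]|.

Definition profile (R : realType) (l : nat) (Fam : {set subsp})
  : {ffun lsets l -> R} := [ffun S => (chain_count Fam S)%:R].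

Definition profile_polytope (R : realType) (k l : nat)
  (x : {ffun lsets l -> R}) : Prop :=
  exists w : {ffun {set subsp} -> R},
    [/\ forall Fam, 0 <= w Fam,
        forall Fam, ~ k_Sperner k Fam -> w Fam = 0,
        \sum_Fam w Fam = 1 &
        forall S, x S = \sum_Fam w Fam * profile R l Fam S].

Definition union_of_levels (k : nat) (Fam : {set subsp}) : Prop :=
  exists L : {set 'I_n.+1},
    (#|L| <= k)%N /\ Fam = [set U : subsp | [exists i in L, \dim U == val i]].

End Profiles.

Definition extreme_point (R : realType) (I : finType)
  (P : {ffun I -> R} -> Prop) (x : {ffun I -> R}) : Prop :=
  P x /\ forall (y z : {ffun I -> R}) (t : R), P y -> P z -> 0 < t < 1 ->
    (forall i, x i = t * y i + (1 - t) * z i) -> y = z.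

(* Main.v *)
Require Import Defs.
From HB Require Import structures.
From mathcomp Require Import all_boot all_order all_algebra all_field.
From mathcomp Require Import reals.
From mathcomp Require Import ring lra.
Set Implicit Arguments. Unset Strict Implicit. Unset Printing Implicit Defensive.
Import Order.TTheory GRing.Theory Num.Theory.
Local Open Scope ring_scope.

Section A.
Variables (F : finFieldType) (n : nat).
Local Notation V := 'rV[F]_n.

Lemma dimV : \dim {:V} = n.
Proof. by rewrite dimvf /dim /= mul1n. Qed.

Lemma free_take (b : seq V) i : free b -> free (take i b).
Proof. by rewrite -{1}(cat_take_drop i b) => /catl_free. Qed.

Lemma dim_take (b : seq V) i : free b -> (i <= size b)%N -> \dim <<take i b>> = i.
Proof. by move=> /(free_take i) /eqP -> ?; rewrite size_take_min; apply/minn_idPl. Qed.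

Lemma span_take_le (b : seq V) i j : (i <= j)%N -> (<<take i b>> <= <<take j b>>)%VS.
Proof.
move=> lij; apply: sub_span => x; rewrite -(subnKC lij) takeD mem_cat => ->. done.
Qed.
End A.
Section A.
Variables (F : finFieldType) (n : nat).
Local Notation V := 'rV[F]_n.

Lemma ext_free (p : seq V) (U : {vspace V}) : free p -> (<<p>> <= U)%VS ->
  exists r, free (p ++ r) /\ <<p ++ r>>%VS = U.
Proof.
move=> fp pU; exists (vbasis (U :\: <<p>>)); split.
  rewrite cat_free fp (basis_free (vbasisP _)) /=; apply/directv_addP.
  by rewrite (span_basis (vbasisP _)) capvC capv_diff.
by rewrite span_cat (span_basis (vbasisP _)) addvC addv_diff; apply/addv_idPl.
Qed.

Lemma take_free_span (s1 s2 : seq V) : free (s1 ++ s2) ->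
  <<take (\dim <<s1>>) (s1 ++ s2)>>%VS = <<s1>>%VS.
Proof.
move=> /catl_free /eqP ->; by rewrite take_size_cat.
Qed.

Lemma adapted_ext (us : seq {vspace V}) (p : seq V) :
  free p -> path (fun A B => (A <= B)%VS) <<p>>%VS us ->
  exists r, [/\ free (p ++ r), <<p ++ r>>%VS = fullv &
     forall U, U \in us -> <<take (\dim U) (p ++ r)>>%VS = U].
Proof.
elim: us p => [|U us IH] p fp /=.
  move=> _; have [r [fr sr]] := ext_free fp (subvf <<p>>%VS).
  by exists r; split.
case/andP=> pU pth.
have [r1 [fr1 sr1]] := ext_free fp pU.
rewrite -sr1 in pth; have [r2 [fr2 sr2 H2]] := IH _ fr1 pth.
exists (r1 ++ r2); rewrite catA; split => // W; rewrite inE => /orP[/eqP ->|Wus].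
  by rewrite -sr1 take_free_span.
exact: H2.
Qed.
End A.
Section B.
Variables (F : finFieldType) (n : nat).
Local Notation V := 'rV[F]_n.
Lemma chain_le m (c : 'I_m -> subsp F n) : is_chain c ->
  forall i j : 'I_m, i.+1 = j :> nat -> (c i <= c j)%VS.
Proof.
move=> /forallP H i j e; have := H i => /forallP /(_ j); rewrite e eqxx /=.
by case/andP.
Qed.

Lemma adapted_frame m (c : 'I_m -> subsp F n) : is_chain c ->
  exists b : n.-tuple V, free b /\ forall j, <<take (\dim (c j)) b>>%VS = c j.
Proof.
case: m c => [|m] c ch.
  have [r [fr sr _]] := adapted_ext (F:=F) (n:=n) (us:=[::]) (p:=[::]) (nil_free _) is_true_true.
  have sz : size r == n by move: fr; rewrite /free cat0s sr dimV eq_sym.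
  by exists (Tuple sz); split => // -[].
pose us := mkseq (fun i => c (inord i)) m.+1.
have pth : path (fun A B => (A <= B)%VS) <<[::] : seq V>>%VS us.
  apply/(pathP 0%VS) => i; rewrite size_mkseq => im.
  rewrite nth_mkseq //; case: i im => [|i] im /=; first by rewrite span_nil sub0v.
  rewrite nth_mkseq ?(ltnW im) //; apply: chain_le => //.
  by rewrite !inordK // (ltnW im).
have [r [fr sr H]] := adapted_ext (p:=[::]) (nil_free _) pth.
have sz : size r == n by move: fr; rewrite /free cat0s sr dimV eq_sym.
exists (Tuple sz); split => // j.
have /H : c j \in us.
  apply/(nthP 0%VS); exists j; rewrite ?size_mkseq // nth_mkseq //.
  by rewrite inord_val.
by [].
Qed.
End B.
Section C.
Variables (F : finFieldType) (n : nat).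
Local Notation V := 'rV[F]_n.

Definition frames := [set b : n.-tuple V | free b].
Definition spanT (b : n.-tuple V) (i : nat) : subsp F n := <<take i b>>%VS.
Definition fiber m (c : 'I_m -> subsp F n) :=
  [set b in frames | [forall j, spanT b (\dim (c j)) == c j]].

Lemma free_full (b : n.-tuple V) : free b -> <<b>>%VS = fullv.
Proof.
move=> fb; apply/eqP; rewrite eqEdim subvf /= dimV.
by move: fb; rewrite /free size_tuple => /eqP ->.
Qed.

Lemma fiber_le m (c c' : 'I_m -> subsp F n) : is_chain c -> is_chain c' ->
  (forall j, \dim (c j) = \dim (c' j)) -> (#|fiber c| <= #|fiber c'|)%N.
Proof.
move=> ch ch' ed.
have [b0 [f0 H0]] := adapted_frame ch.
have [b0' [f0' H0']] := adapted_frame ch'.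
have [f Hf] := linear_of_free b0 b0'.
have mf : map f b0 = b0' by apply: Hf => //; rewrite !size_tuple.
pose phi : 'End(V) := linfun f.
have mphi : map phi b0 = b0'.
  by rewrite -mf; apply: eq_map => x; rewrite lfunE.
have k0 : lker phi == 0%VS.
  have := limg_ker_dim phi fullv.
  rewrite capfv dimV -(free_full f0) limg_span mphi (free_full f0') dimV.
  move=> e; have : (\dim (lker phi) == 0)%N by rewrite -(eqn_add2r n) e.
  by rewrite dimv_eq0.
have img (b : n.-tuple V) i : spanT [tuple of map phi b] i = (phi @: spanT b i)%VS.
  by rewrite /spanT limg_span /= map_take.
pose Phi (b : n.-tuple V) := [tuple of map phi b].
have injPhi : injective Phi.
  move=> b1 b2 /(congr1 val) /= /(inj_map (lker0P k0)) e; exact: val_inj.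
rewrite -(card_imset _ injPhi); apply: subset_leq_card.
apply/subsetP => _ /imsetP [b bin ->].
move: bin; rewrite !inE => /andP [fb /forallP Hb]; apply/andP; split.
  move: fb; rewrite /free /= size_map.
  by rewrite -limg_span limg_dim_eq // (eqP k0) capv0.
apply/forallP => j; rewrite -ed img (eqP (Hb j)).
rewrite -{1}(H0 j) -/(spanT b0 _) -img.
have -> : [tuple of map phi b0] = b0' by apply: val_inj.
by rewrite /spanT ed H0'.
Qed.

Lemma fiber_card m (c c' : 'I_m -> subsp F n) : is_chain c -> is_chain c' ->
  (forall j, \dim (c j) = \dim (c' j)) -> #|fiber c| = #|fiber c'|.
Proof.
move=> ch ch' ed; apply/eqP; rewrite eqn_leq !fiber_le //.

Qed.
End C.
Section D.
Variables (F : finFieldType) (n : nat).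
Local Notation V := 'rV[F]_n.

Lemma enum_lt (A : {set 'I_n.+1}) (i j : nat) : (i < j)%N -> (j < #|A|)%N ->
  (val (nth ord0 (enum A) i) < val (nth ord0 (enum A) j))%N.
Proof.
move=> ij jA.
have inc : sorted ltn (map val (enum A)).
  rewrite -[enum _](eq_filter (mem_enum _)).
  rewrite -(eq_filter (mem_map val_inj _)) -filter_map.
  by rewrite (sorted_filter ltn_trans) // unlock val_ord_enum iota_ltn_sorted.
have sz : size (enum A) = #|A| by rewrite cardE.
rewrite -!(nth_map ord0 0%N) ?sz ?(ltn_trans ij) //.
apply: (sorted_ltn_nth ltn_trans) => //; rewrite inE size_map sz //.
exact: ltn_trans ij jA.
Qed.

Lemma chain_dim_lt k (c : 'I_k.+1 -> subsp F n) : is_chain c ->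
  forall i j : 'I_k.+1, (i < j)%N -> (\dim (c i) < \dim (c j))%N.
Proof.
move=> /forallP ch.
have step (i : 'I_k.+1) (j : 'I_k.+1) : i.+1 = j :> nat -> (\dim (c i) < \dim (c j))%N.
  move=> e; have := ch i => /forallP /(_ j); rewrite e eqxx /= /psubv => /andP [le ne].
  by rewrite ltn_neqAle (dimv_leqif_eq le) ne (dimv_leqif_eq le).
pose f (i : nat) := \dim (c (inord i)).
have H := @homo_ltn_in nat [pred i | (i < k.+1)%N] f (fun a b => (a < b)%N) ltn_trans.
move=> i j ij; have := H _ _ i j; rewrite /f !inord_val; apply => //.
- by move=> a b; rewrite !inE => _ bk d /andP [_ db]; exact: ltn_trans db bk.
- move=> a; rewrite !inE => ak a1k; apply: step; rewrite !inordK // ?ltnW //.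
- by rewrite inE.
- by rewrite inE.
Qed.

Lemma levels_Sperner k (G : {set subsp F n}) : union_of_levels k G -> k_Sperner k G.
Proof.
move=> [L [Lk ->]] [c [cin ch]].
have gP (i : 'I_k.+1) : exists2 g : 'I_n.+1, g \in L & \dim (c i) = g.
  by have := cin i; rewrite inE => /existsP [g /andP [gL /eqP e]]; exists g.
pose g (i : 'I_k.+1) := inord (\dim (c i)) : 'I_n.+1.
have gL i : g i \in L.
  by have [g' g'L e] := gP i; rewrite /g e inord_val.
have gv i : val (g i) = \dim (c i).
  by have [g' g'L e] := gP i; rewrite /g e inord_val.
have injg : injective g.
  move=> i j e; apply/eqP; apply: contraT; rewrite neq_ltn => /orP [] lt.
    by have := chain_dim_lt ch lt; rewrite -!gv e ltnn.
  by have := chain_dim_lt ch lt; rewrite -!gv e ltnn.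
have : (#|[set g i | i in [set: 'I_k.+1]]| <= #|L|)%N.
  by apply: subset_leq_card; apply/subsetP => _ /imsetP [i _ ->].
rewrite card_imset // cardsT card_ord => H; have := leq_trans H Lk.
by rewrite ltnn.
Qed.
End D.
Section E.
Variables (F : finFieldType) (n l : nat) (S : lsets n l).
Local Notation V := 'rV[F]_n.

Definition sj (j : 'I_l) : nat := val (nth ord0 (enum (val S)) j).
Definition CS (Fam : {set subsp F n}) :=
  [set c : {ffun 'I_l -> subsp F n} |
      [&& [forall j, c j \in Fam], is_chain c &
          [forall j : 'I_l, \dim (c j) == val (nth ord0 (enum (val S)) j)]]].
Definition chainOf (b : n.-tuple V) : {ffun 'I_l -> subsp F n} :=
  [ffun j => spanT b (sj j)].

Lemma cardS : #|val S| = l.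
Proof. by case: S => /= A /eqP. Qed.

Lemma sizeS : size (enum (val S)) = l.
Proof. by rewrite -cardE cardS. Qed.

Lemma sj_lt (i j : 'I_l) : (i < j)%N -> (sj i < sj j)%N.
Proof. by move=> ij; apply: enum_lt => //; rewrite cardS. Qed.

Lemma sj_le (j : 'I_l) : (sj j <= n)%N.
Proof. by rewrite /sj -ltnS ltn_ord. Qed.

Lemma sj_in (j : 'I_l) : nth ord0 (enum (val S)) j \in val S.
Proof. by rewrite -mem_enum mem_nth // sizeS. Qed.

Lemma sj_onto (i : 'I_n.+1) : i \in val S -> exists j : 'I_l, sj j = i.
Proof.
rewrite -mem_enum => iS.
have lt : (index i (enum (val S)) < l)%N by move: iS; rewrite -index_mem sizeS.
by exists (Ordinal lt); rewrite /sj /= nth_index.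
Qed.

Lemma spanT_psub (b : n.-tuple V) i j : free b -> (i < j)%N -> (j <= n)%N ->
  psubv (spanT b i) (spanT b j).
Proof.
move=> fb ij jn; rewrite /psubv /spanT span_take_le ?(ltnW ij) //=.
apply/negP => /eqP e.
have := congr1 (fun U => \dim U) e; rewrite /= !dim_take ?size_tuple ?(ltnW (leq_trans ij jn)) //.
by move=> eij; rewrite eij ltnn in ij.
Qed.

Lemma chainOf_CS_iff (Fam : {set subsp F n}) (b : n.-tuple V) : b \in frames F n ->
  (chainOf b \in CS Fam) = [forall j, chainOf b j \in Fam].
Proof.
rewrite inE => fb; rewrite inE; case: [forall j, _] => //=.
apply/andP; split.
  apply/forallP => i; apply/forallP => j; apply/implyP => /eqP e.
  rewrite !ffunE; apply: spanT_psub => //; last exact: sj_le.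
  by apply: sj_lt; rewrite -e.
apply/forallP => j; rewrite ffunE /spanT dim_take ?size_tuple ?sj_le //.
Qed.
End E.
Section E2.
Variables (F : finFieldType) (n l : nat) (S : lsets n l).
Local Notation V := 'rV[F]_n.

Definition Lev (D : {set 'I_n.+1}) : {set subsp F n} :=
  [set U : subsp F n | [exists i in D, \dim U == val i]].
Definition Dset (Fam : {set subsp F n}) (b : n.-tuple V) : {set 'I_n.+1} :=
  [set i : 'I_n.+1 | spanT b i \in Fam].

Lemma chain_countE (Fam : {set subsp F n}) : chain_count Fam S = #|CS S Fam|.
Proof. by []. Qed.

Lemma chainOf_Dset (Fam : {set subsp F n}) (b : n.-tuple V) :
  [forall j, chainOf S b j \in Fam] = (val S \subset Dset Fam b).
Proof.
apply/forallP/subsetP => [H i iS | H j].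
  have [j ej] := sj_onto iS; have := H j; rewrite ffunE ej inE => ->. done.
rewrite ffunE; have := H _ (sj_in S j); rewrite inE.
by [].
Qed.

Lemma count_Lev (D : {set 'I_n.+1}) :
  chain_count (Lev D) S = if val S \subset D then chain_count [set: subsp F n] S else 0%N.
Proof.
rewrite !chain_countE; case: ifP => [/subsetP SD | /negbT nSD].
  apply: eq_card => c; rewrite !inE.
  apply/and3P/and3P => -[_ ch /forallP dims]; (split => //; last by apply/forallP);
    apply/forallP => j; first by rewrite ?inE.
  rewrite ?inE; apply/existsP; exists (nth ord0 (enum (val S)) j).
  by rewrite dims SD // sj_in.
apply: eq_card0 => c; rewrite inE; apply/negP => /and3P [/forallP inD _ /forallP dims].
move: nSD => /subsetPn [i iS niD].
have [j ej] := sj_onto iS.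
have := inD j; rewrite inE => /existsP [i' /andP [i'D /eqP e]].
move: (dims j); rewrite e => /eqP e2.
have : i' = i by apply: val_inj; rewrite /= e2 -ej.
by move=> ii; rewrite -ii i'D in niD.
Qed.
End E2.
Section E3.
Variables (F : finFieldType) (n l : nat) (S : lsets n l).
Local Notation V := 'rV[F]_n.

Lemma chainOf_type (b : n.-tuple V) : b \in frames F n ->
  is_chain (chainOf S b) /\ forall j, \dim (chainOf S b j) = sj S j.
Proof.
move=> bf; have := chainOf_CS_iff S [set: subsp F n] bf.
have -> : [forall j, chainOf S b j \in [set: subsp F n]] by apply/forallP => j; rewrite inE.
rewrite inE => /and3P [_ ch /forallP dims]; split => // j.
by apply/eqP; exact: dims.
Qed.

Lemma fiber_eq (c : {ffun 'I_l -> subsp F n}) : (forall j, \dim (c j) = sj S j) ->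
  fiber c = [set b in frames F n | chainOf S b == c].
Proof.
move=> dims; apply/setP => b; rewrite !inE; congr (_ && _).
apply/forallP/eqP => [H | e j]; last by rewrite dims -e ffunE.
apply: (ffunP (chainOf S b) c).1 => j; rewrite ffunE -dims; apply/eqP; exact: H.
Qed.

Lemma double_count (Fam : {set subsp F n}) (b0 : n.-tuple V) : b0 \in frames F n ->
  (chain_count Fam S * #|fiber (chainOf S b0)|)%N =
  #|[set b in frames F n | chainOf S b \in CS S Fam]|.
Proof.
move=> b0f; have [ch0 d0] := chainOf_type b0f.
rewrite -[#|[set b in _ | _]|]sum1_card.
rewrite (eq_bigl (fun b => (b \in frames F n) && (chainOf S b \in CS S Fam))); last first.
  by move=> b; rewrite inE.
rewrite (partition_big (chainOf S) (mem (CS S Fam))) /=; last by move=> i /andP [].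
rewrite chain_countE -sum_nat_const; apply: eq_bigr => c cin.
move: (cin); rewrite inE => /and3P [_ ch /forallP dims].
have dims' : forall j, \dim (c j) = sj S j by move=> j; apply/eqP; exact: dims.
rewrite (@fiber_card _ _ _ (chainOf S b0) c) //; last by move=> j; rewrite d0 dims'.
rewrite fiber_eq // -sum1_card; apply: eq_bigl => b; rewrite inE.
case: (b \in frames F n) => //=; case: eqP => [->|]; by rewrite ?cin ?andbF.
Qed.
End E3.
Arguments Lev {F n} D.
Section F1.
Variables (F : finFieldType) (n l : nat) (S : lsets n l).
Local Notation V := 'rV[F]_n.

Lemma frames_n0 : exists b0 : n.-tuple V, b0 \in frames F n.
Proof.
have ch : is_chain (fun i : 'I_0 => (0%VS : subsp F n)) by apply/forallP => -[].
have [b [fb _]] := adapted_frame ch.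
by exists b; rewrite inE.
Qed.

Lemma sum_if (P : pred (n.-tuple V)) (T : nat) :
  (\sum_(b in frames F n) (if P b then T else 0%N))%N = (#|[set b in frames F n | P b]| * T)%N.
Proof.
rewrite -big_mkcondr /= -sum_nat_const; apply: eq_bigl => b; by rewrite !inE.
Qed.

Lemma key_identity (R : realType) (Fam : {set subsp F n}) :
  profile R l Fam S =
  \sum_(b in frames F n) (#|frames F n|%:R)^-1 * profile R l (@Lev F n (Dset Fam b)) S.
Proof.
have [b0 b0f] := frames_n0.
set M := #|fiber (chainOf S b0)|.
set T := chain_count [set: subsp F n] S.
have h1 := double_count S Fam b0f.
have h2 := double_count S [set: subsp F n] b0f.
have e2 : [set b in frames F n | chainOf S b \in CS S [set: subsp F n]] = frames F n.
  apply/setP => b; rewrite [in LHS]in_set; case bf: (b \in frames F n) => //=.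
  by rewrite chainOf_CS_iff //; apply/forallP => j; rewrite inE.
rewrite e2 in h2.
have e1 : [set b in frames F n | chainOf S b \in CS S Fam] =
          [set b in frames F n | val S \subset Dset Fam b].
  apply: eq_finset => b /=; case bf: (b \in frames F n) => //=.
  by rewrite chainOf_CS_iff // chainOf_Dset.
rewrite e1 in h1.
rewrite -mulr_sumr.
under eq_bigr => b _ do rewrite ffunE count_Lev.
rewrite -natr_sum.
rewrite (@sum_if (fun b => val S \subset Dset Fam b)) -h1 -h2 ffunE.
have fr0 : (0 < #|frames F n|)%N by apply/card_gt0P; exists b0.
have : ((T * M)%:R != 0 :> R) by rewrite h2 pnatr_eq0 -lt0n fr0.
rewrite !natrM => ne0.
rewrite /T /M in ne0 *. field.
by move: ne0; rewrite mulf_eq0 negb_or andbC.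
Qed.
End F1.
Section G.
Variables (R : realType) (F : finFieldType) (n k l : nat).
Local Notation V := 'rV[F]_n.
Local Notation fams := {set subsp F n}.

Lemma mixture_in (v : {ffun fams -> R}) :
  (forall G, 0 <= v G) -> (forall G, ~ k_Sperner k G -> v G = 0) -> \sum_G v G = 1 ->
  @profile_polytope F n R k l [ffun S => \sum_G v G * profile R l G S].
Proof. by move=> h1 h2 h3; exists v; split => // S; rewrite ffunE. Qed.

Lemma dirac_in (G0 : fams) : k_Sperner k G0 -> @profile_polytope F n R k l (profile R l G0).
Proof.
move=> sp.
have -> : profile R l G0 = [ffun S => \sum_G [ffun G => if G == G0 then 1 else 0 : R] G * profile R l G S].
  apply/ffunP => S; rewrite [RHS]ffunE (bigD1 G0) //= !ffunE eqxx mul1r big1 ?addr0 //.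
  by move=> G /negPf nG; rewrite ffunE nG mul0r.
apply: mixture_in => [G | G nsp | ]; rewrite ?ffunE.
- by case: ifP.
- by case: eqP => // e; rewrite e in nsp.
- rewrite (bigD1 G0) //= big1 ?ffunE ?eqxx ?addr0 //.
  by move=> G /negPf nG; rewrite ffunE nG.
Qed.

Lemma count_le (G : fams) (S : lsets n l) : (chain_count G S <= chain_count [set: subsp F n] S)%N.
Proof.
rewrite !chain_countE; apply: subset_leq_card; apply/subsetP => c; rewrite !inE.
case/and3P => _ ch dims; apply/and3P; split => //; apply/forallP => j; by rewrite ?inE.
Qed.

Lemma poly_bound (y : {ffun lsets n l -> R}) (S : lsets n l) : @profile_polytope F n R k l y ->
  0 <= y S <= (chain_count [set: subsp F n] S)%:R.
Proof.
move=> [w [w0 _ w1 ->]]; apply/andP; split.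
  by apply: sumr_ge0 => G _; rewrite ffunE mulr_ge0.
have -> : (chain_count [set: subsp F n] S)%:R = (\sum_G w G) * (chain_count [set: subsp F n] S)%:R :> R.
  by rewrite w1 mul1r.
rewrite mulr_suml; apply: ler_sum => G _.
by rewrite ffunE ler_wpM2l // ler_nat count_le.
Qed.
End G.
Section H.
Variables (R : realType) (F : finFieldType) (n k l : nat).
Local Notation fams := {set subsp F n}.

Lemma levels_extreme (G0 : fams) : union_of_levels k G0 ->
  extreme_point (@profile_polytope F n R k l) (profile R l G0).
Proof.
move=> ul; split; first exact: dirac_in (levels_Sperner ul).
move=> y z t Py Pz /andP[t0 t1] e; apply/ffunP => S.
have [L [_ eG]] := ul.
have /andP [y0 yT] := poly_bound S Py.
have /andP [z0 zT] := poly_bound S Pz.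
move: (e S); rewrite ffunE eG count_Lev.
case: ifP => _ h.
- nra.
- nra.
Qed.
End H.
Section I.
Variables (F : finFieldType) (n k : nat).
Local Notation fams := {set subsp F n}.

Lemma sperner_D (Fam : fams) (b : n.-tuple 'rV[F]_n) :
  k_Sperner k Fam -> b \in frames F n -> (#|Dset Fam b| <= k)%N.
Proof.
move=> sp bf; rewrite leqNgt; apply/negP => kD; apply: sp.
have fb : free b by move: bf; rewrite inE.
pose d (i : 'I_k.+1) := nth ord0 (enum (Dset Fam b)) i.
have szD : size (enum (Dset Fam b)) = #|Dset Fam b| by rewrite cardE.
exists (fun i => spanT b (d i)); split.
  move=> i; have : d i \in Dset Fam b.
    by rewrite -mem_enum mem_nth // szD (leq_trans (ltn_ord i)).
  by rewrite inE.
apply/forallP => i; apply/forallP => j; apply/implyP => /eqP e.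
apply: spanT_psub => //; last by rewrite -ltnS ltn_ord.
apply: enum_lt; first by rewrite -e.
exact: leq_trans (ltn_ord j) kD.
Qed.

Lemma Lev_union (D : {set 'I_n.+1}) : (#|D| <= k)%N -> union_of_levels k (@Lev F n D).
Proof. by move=> Dk; exists D. Qed.
End I.
Section J.
Variables (R : realType) (F : finFieldType) (n k l : nat).
Local Notation fams := {set subsp F n}.
Local Notation V := 'rV[F]_n.

Lemma sum_ind (X : fams) (g : fams -> R) : \sum_G (X == G)%:R * g G = g X.
Proof.
rewrite (bigD1 X) //= eqxx mul1r big1 ?addr0 // => G nG.
by rewrite eq_sym (negPf nG) mul0r.
Qed.

Lemma nz_pick (I : finType) (f : I -> R) : \sum_i f i != 0 -> exists i, f i != 0.
Proof.
case: (pickP (fun i => f i != 0)) => [i hi | h]; first by exists i.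
by rewrite big1 ?eqxx // => i _; move: (h i) => /negbFE /eqP.
Qed.

Lemma nz_pick_in (I : finType) (A : {set I}) (f : I -> R) :
  \sum_(i in A) f i != 0 -> exists2 i, i \in A & f i != 0.
Proof.
case: (pickP (fun i => (i \in A) && (f i != 0))) => [i /andP [hA hi] | h]; first by exists i.
rewrite big1 ?eqxx // => i iA; move: (h i); rewrite iA /= => /negbFE /eqP.
by [].
Qed.

Lemma forward (x : {ffun lsets n l -> R}) :
  extreme_point (@profile_polytope F n R k l) x ->
  exists G : fams, union_of_levels k G /\ x = profile R l G.
Proof.
move=> [[w [w0 wS w1 xE]] ext].
pose c := (#|frames F n|%:R)^-1 : R.
pose w' := [ffun G : fams => \sum_Fam w Fam *
   \sum_(b in frames F n) c * ((@Lev F n (Dset Fam b) == G)%:R)].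
have c0 : 0 <= c by rewrite invr_ge0 ler0n.
have w'0 G : 0 <= w' G.
  rewrite ffunE; apply: sumr_ge0 => Fam _; rewrite mulr_ge0 //.
  by apply: sumr_ge0 => b _; rewrite mulr_ge0 ?ler0n.
have mix (g : fams -> R) : \sum_G w' G * g G =
    \sum_Fam w Fam * \sum_(b in frames F n) c * g (@Lev F n (Dset Fam b)).
  under eq_bigr => G _ do rewrite ffunE mulr_suml.
  rewrite exchange_big /=; apply: eq_bigr => Fam _.
  under eq_bigr => G _ do rewrite -mulrA.
  rewrite -mulr_sumr; congr (_ * _).
  rewrite (eq_bigr (fun G => \sum_(b in frames F n) c * ((@Lev F n (Dset Fam b) == G)%:R * g G))); last first.
    by move=> G _; rewrite mulr_suml; apply: eq_bigr => b _; rewrite mulrA.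
  rewrite exchange_big /=; apply: eq_bigr => b _.
  by rewrite -mulr_sumr sum_ind.
have xw' S : x S = \sum_G w' G * profile R l G S.
  by rewrite xE mix; apply: eq_bigr => Fam _; rewrite key_identity.
have [b0 b0f] := frames_n0 F n.
have fr0 : (0 < #|frames F n|)%N by apply/card_gt0P; exists b0.
have sw' : \sum_G w' G = 1.
  rewrite (eq_bigr (fun G => w' G * 1)); last by move=> *; rewrite mulr1.
  rewrite mix -[RHS]w1; apply: eq_bigr => Fam _ /=.
  rewrite (eq_bigr (fun _ => c)); last by move=> * /=; rewrite mulr1.
  rewrite sumr_const -(mulr_natr c) /c mulVf ?mulr1 //.
  by rewrite pnatr_eq0 -lt0n.
have nzU G : w' G != 0 -> union_of_levels k G.
  rewrite ffunE => /nz_pick [Fam]; rewrite mulf_eq0 negb_or => /andP [wF /nz_pick_in [b bf]].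
  rewrite mulf_eq0 negb_or => /andP [_]; rewrite pnatr_eq0 eqb0 negbK => /eqP <-.
  apply: Lev_union; apply: sperner_D bf => hc.
  by move/eqP: wF; apply; apply: wS => sp; apply: sp.
have vanish G : ~ k_Sperner k G -> w' G = 0.
  move=> nsp; apply/eqP; apply: contraT => /nzU /levels_Sperner.
  by move/nsp.
have [G0 nz0] : exists G0, w' G0 != 0.
  by apply: nz_pick; rewrite sw' oner_neq0.
have UG0 := nzU G0 nz0.
set t := w' G0.
have tpos : 0 < t by rewrite lt_def nz0 w'0.
have sum_oth : \sum_(G | G != G0) w' G = 1 - t.
  by apply/eqP; rewrite eq_sym subr_eq -[1]sw' (bigD1 G0) //= addrC.
have mixD (g : fams -> R) : \sum_G w' G * g G = t * g G0 + \sum_(G | G != G0) w' G * g G.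
  by rewrite (bigD1 G0).
have t1 : t <= 1.
  by rewrite -subr_ge0 -sum_oth; apply: sumr_ge0.
case: (eqVneq t 1) => [te | tn1].
  exists G0; split => //; apply/ffunP => S; rewrite xw' mixD te mul1r.
  have oth0 : forall G, G != G0 -> w' G = 0.
    by apply/psumr_eq0P => // ; rewrite sum_oth te subrr.
  by rewrite big1 ?addr0 // => G /oth0 ->; rewrite mul0r.
have tlt : t < 1 by rewrite lt_def eq_sym tn1 t1.
have ne : 1 - t != 0 by rewrite subr_eq0 eq_sym.
pose v := [ffun G : fams => if G == G0 then 0 else w' G / (1 - t)].
have vmix (g : fams -> R) : \sum_G v G * g G = (1 - t)^-1 * \sum_(G | G != G0) w' G * g G.
  rewrite (bigD1 G0) //= ffunE eqxx mul0r add0r mulr_sumr; apply: eq_bigr => G nG.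
  by rewrite ffunE (negPf nG) mulrAC mulrC mulrA.
pose z := [ffun S => \sum_G v G * profile R l G S].
have Pz : @profile_polytope F n R k l z.
  apply: mixture_in => [G | G nsp | ].
  - rewrite ffunE; case: ifP => // _; rewrite divr_ge0 // subr_ge0 //.
  - by rewrite ffunE vanish // mul0r; case: ifP.
  - rewrite (eq_bigr (fun G => v G * 1)); last by move=> *; rewrite mulr1.
    rewrite (vmix (fun _ => 1)) /= (eq_bigr (fun G => w' G)); last by move=> *; rewrite mulr1.
    by rewrite sum_oth mulVf.
have Py := dirac_in R l (levels_Sperner UG0).
have eqx S : x S = t * profile R l G0 S + (1 - t) * z S.
  have zE : z S = \sum_G v G * profile R l G S by rewrite /z ffunE.
  by rewrite xw' mixD zE vmix mulrA mulfV // mul1r.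
have yz := ext _ _ t Py Pz (introT andP (conj tpos tlt)) eqx.
exists G0; split => //; apply/ffunP => S; rewrite eqx -yz.
by rewrite -mulrDl addrC subrK mul1r.
Qed.
End J.

Theorem corollary4p2 (R : realType) (F : finFieldType) (n k l : nat) :
  (0 < n)%N -> (0 < k)%N -> (0 < l)%N ->
  forall x : {ffun lsets n l -> R},
    extreme_point (@profile_polytope F n R k l) x <->
    exists Fam : {set subsp F n}, union_of_levels k Fam /\ x = @profile F n R l Fam.
Proof.
move=> _ _ _ x; split; first exact: forward.
by move=> [G [uG ->]]; apply: levels_extreme.
Qed.
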